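(* (1) All inert tori in $G$ are conjugate in $G$. (2) If $T$ is an inert torus, there exists $g\in G$ such that $gTg^{-1}$ is an inert torus in canonical form. (3) If $T_1,T_2$ are inert tori in canonical form, there exists $y\in\mathfrak o^\times$ such that $T_1=a(y)T_2a(y)^{-1}$. (4) If $T$ is an inert torus in canonical form, then $G=B_1T=TB_1$ and $K=B_1(\mathfrak o)T(\mathfrak o)=T(\mathfrak o)B_1(\mathfrak o)$.
   Context: $F$ is a non-archimedean local field of characteristic zero with ring of integers $\mathfrak o$ and odd residue field cardinality; $E$ is its unramified quadratic extension. $G=\mathrm{GL}_2(F)$, $K=\mathrm{GL}_2(\mathfrak o)$, $a(y)=\begin{pmatrix}y&0\\0&1\end{pmatrix}$, $B_1=\{\begin{pmatrix}y&x\\0&1\end{pmatrix}:y\in F^\times,x\in F\}$, $B_1(\mathfrak o)=B_1\cap K$. For $\alpha,\beta,\gamma\in F$ let $S=\begin{pmatrix}\alpha&\beta/2\\\beta/2&\gamma\end{pmatrix}$ and $T_{\alpha,\beta,\gamma}=\{g\in G:{}^tgSg=\det(g)S\}$. A subgroup $T$ is an inert torus if $T=T_{\alpha,\beta,\gamma}$ with $\delta=\beta^2-4\alpha\gamma$ satisfying $F(\sqrt\delta)=E$ (equivalently $\delta$ is a non-square with $v(\delta)$ even). It is in canonical form if $T=T_{\alpha,0,1}$ with $\alpha\in\mathfrak o^\times$ and $-\alpha$ not a square in $\mathfrak o^\times$. $T(\mathfrak o)=T\cap K$. *)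

(* Defs.v *)
From HB Require Import structures.
From mathcomp Require Import all_boot all_order all_algebra.
Set Implicit Arguments. Unset Strict Implicit. Unset Printing Implicit Defensive.
Import Order.TTheory GRing.Theory Num.Theory.
Local Open Scope ring_scope.

Section LocalField.
Variables (F : fieldType) (v : F -> int).

(* ring of integers o, its maximal ideal m, and units o^x, via the valuation v
   (v 0 is irrelevant: 0 is treated as having valuation +oo) *)
Definition in_o (x : F) : Prop := x = 0 \/ 0 <= v x.
Definition in_m (x : F) : Prop := x = 0 \/ 0 < v x.
Definition is_ounit (x : F) : Prop := x <> 0 /\ v x = 0.

Record nonarch_local_field : Prop := {
  nalf_char0 : forall n : nat, (n.+1)%:R != 0 :> F;
  nalf_mul : forall x y, x <> 0 -> y <> 0 -> v (x * y) = v x + v y;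
  nalf_ultra : forall x y, x <> 0 -> y <> 0 -> x + y <> 0 ->
      Num.min (v x) (v y) <= v (x + y);
  nalf_normalized : exists pi : F, pi <> 0 /\ v pi = 1;
  nalf_complete : forall u : nat -> F,
      (forall k : int, exists N, forall m n, (N <= m)%N -> (N <= n)%N ->
          u m - u n = 0 \/ k <= v (u m - u n)) ->
      exists l : F, forall k : int, exists N, forall n, (N <= n)%N ->
          u n - l = 0 \/ k <= v (u n - l);
  nalf_residue : exists s : seq F,
      [/\ forall r, r \in s -> in_o r,
          uniq s,
          forall r1 r2, r1 \in s -> r2 \in s -> r1 != r2 -> ~ in_m (r1 - r2),
          forall x, in_o x -> exists2 r, r \in s & in_m (x - r)
        & odd (size s)]
}.

Definition mx2 (a b c d : F) : 'M[F]_2 :=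
  \matrix_(i < 2, j < 2)
    if (i == 0 :> nat) then (if (j == 0 :> nat) then a else b)
    else (if (j == 0 :> nat) then c else d).

Definition inG (g : 'M[F]_2) : Prop := g \in unitmx.
Definition inK (g : 'M[F]_2) : Prop :=
  (forall i j, in_o (g i j)) /\ is_ounit (\det g).
Definition amx (y : F) : 'M[F]_2 := mx2 y 0 0 1.
Definition inB1 (g : 'M[F]_2) : Prop :=
  exists y x, y <> 0 /\ g = mx2 y x 0 1.
Definition inB1o (g : 'M[F]_2) : Prop := inB1 g /\ inK g.

Definition Smx (a b c : F) : 'M[F]_2 := mx2 a (b / 2%:R) (b / 2%:R) c.
Definition torus (a b c : F) (g : 'M[F]_2) : Prop :=
  inG g /\ g^T *m Smx a b c *m g = \det g *: Smx a b c.

Definition is_square (x : F) : Prop := exists y, y * y = x.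

(* delta = b^2 - 4ac generates the unramified quadratic extension:
   non-square with even valuation *)
Definition inert_params (a b c : F) : Prop :=
  let d := b ^+ 2 - 4%:R * a * c in
  d <> 0 /\ ~ is_square d /\ ~~ odd `|v d|%N.

Definition same_set (A B : 'M[F]_2 -> Prop) : Prop := forall g, A g <-> B g.

Definition inert_torus (T : 'M[F]_2 -> Prop) : Prop :=
  exists a b c, inert_params a b c /\ same_set T (torus a b c).

Definition canonical_param (a : F) : Prop :=
  is_ounit a /\ ~ (exists u, is_ounit u /\ u * u = - a).

Definition canonical_torus (T : 'M[F]_2 -> Prop) : Prop :=
  exists a, canonical_param a /\ same_set T (torus a 0 1).

Definition conj_set (g : 'M[F]_2) (T : 'M[F]_2 -> Prop) : 'M[F]_2 -> Prop :=
  fun x => exists2 t, T t & x = g *m t *m invmx g.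

Definition prod_set (A B : 'M[F]_2 -> Prop) : 'M[F]_2 -> Prop :=
  fun x => exists a b, [/\ A a, B b & x = a *m b].

Definition inTo (T : 'M[F]_2 -> Prop) (g : 'M[F]_2) : Prop := T g /\ inK g.

End LocalField.

(* Main.v *)
Require Import Defs.
From HB Require Import structures.
From mathcomp Require Import all_boot all_order all_algebra.
From mathcomp Require Import ring zify.
Import Order.TTheory GRing.Theory Num.Theory.
Local Open Scope ring_scope.
Set Implicit Arguments. Unset Strict Implicit.

Section Mx.
Variable F : fieldType.


Lemma ord2_cases (i : 'I_2) : i = 0 \/ i = 1.
Proof. case: i => [[|[|k]] hk]; [left|right|] => //; apply/eqP; by []. Qed.

Lemma mx2E (a b c d : F) :
  [/\ mx2 a b c d 0 0 = a, mx2 a b c d 0 1 = b, mx2 a b c d 1 0 = c & mx2 a b c d 1 1 = d].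
Proof. by rewrite /mx2 !mxE. Qed.

Lemma mx2_eta (M : 'M[F]_2) : M = mx2 (M 0 0) (M 0 1) (M 1 0) (M 1 1).
Proof.
apply/matrixP => i j; rewrite /mx2 mxE.
by case: (ord2_cases i) => ->; case: (ord2_cases j) => ->.
Qed.

Lemma mx2_eq (a b c d a' b' c' d' : F) :
  mx2 a b c d = mx2 a' b' c' d' <-> [/\ a = a', b = b', c = c' & d = d'].
Proof.
split => [h|[-> -> -> ->] //].
have := congr1 (fun M : 'M[F]_2 => (M 0 0, M 0 1, M 1 0, M 1 1)) h.
by rewrite /mx2 !mxE /= => -[].
Qed.

Lemma mulmx2 (a b c d a' b' c' d' : F) :
  mx2 a b c d *m mx2 a' b' c' d' =
  mx2 (a * a' + b * c') (a * b' + b * d') (c * a' + d * c') (c * b' + d * d').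
Proof.
apply/matrixP => i j; rewrite !mxE !big_ord_recr big_ord0 /= add0r !mxE /=.
by case: (ord2_cases i) => ->; case: (ord2_cases j) => ->.
Qed.

Lemma trmx2 (a b c d : F) : (mx2 a b c d)^T = mx2 a c b d.
Proof.
apply/matrixP => i j; rewrite !mxE.
by case: (ord2_cases i) => ->; case: (ord2_cases j) => ->.
Qed.

Lemma scalemx2 (k a b c d : F) : k *: mx2 a b c d = mx2 (k * a) (k * b) (k * c) (k * d).
Proof.
apply/matrixP => i j; rewrite !mxE.
by case: (ord2_cases i) => ->; case: (ord2_cases j) => ->.
Qed.

Lemma detmx2 (a b c d : F) : \det (mx2 a b c d) = a * d - b * c.
Proof.
rewrite (expand_det_row _ 0) !big_ord_recr big_ord0 /= add0r.
rewrite /cofactor !det_mx11 /row' /col' !mxE /= !expr0 !expr1.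
by ring.
Qed.

Lemma mx2_1 : 1%:M = mx2 1 0 0 1 :> 'M[F]_2.
Proof.
apply/matrixP => i j; rewrite !mxE.
by case: (ord2_cases i) => ->; case: (ord2_cases j) => ->.
Qed.


Lemma invmx2 (a b c d : F) : a * d - b * c != 0 ->
  invmx (mx2 a b c d) = let D := a * d - b * c in mx2 (d / D) (- b / D) (- c / D) (a / D).
Proof.
move=> hD /=.
have uA : mx2 a b c d \in unitmx by rewrite unitmxE detmx2 unitfE.
set B := mx2 (d / _) _ _ _.
have AB : mx2 a b c d *m B = 1%:M by rewrite mulmx2 mx2_1; apply/mx2_eq; split; field.
by rewrite -[LHS]mulmx1 -AB mulmxA mulVmx // mul1mx.
Qed.

Definition torusM (S : 'M[F]_2) g := g \in unitmx /\ g^T *m S *m g = \det g *: S.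

Lemma torusM_scale S (l : F) : l != 0 -> same_set (torusM (l *: S)) (torusM S).
Proof.
move=> hl g; rewrite /torusM -scalemxAr -scalemxAl scalerA mulrC -scalerA.
split=> -[u h]; split => //; last by rewrite h.
by apply: (scalerI hl).
Qed.

Lemma trmx_inv_unit (g : 'M[F]_2) : g \in unitmx -> g^T \in unitmx.
Proof. by rewrite unitmx_tr. Qed.

Lemma torusM_conj S S' g : g \in unitmx -> S = g^T *m S' *m g ->
  same_set (conj_set g (torusM S)) (torusM S').
Proof.
move=> ug hS.
have ugT := trmx_inv_unit ug.
have dg : \det g != 0 by rewrite -unitfE -unitmxE.
have hS' : S' = invmx g^T *m S *m invmx g.
  by rewrite hS !mulmxA mulVmx // mul1mx mulmxK.
move=> x; split.
  case=> t [ut ht] ->; split; first by rewrite !unitmx_mul ut ug unitmx_inv.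
  rewrite !det_mulmx det_inv mulrC mulrA mulVf // mul1r.
  rewrite !trmx_mul trmx_inv hS' !mulmxA mulmxK // mulmxKV //.
  rewrite -!mulmxA (mulmxA t^T) (mulmxA (t^T *m S)) ht -scalemxAl.
  by rewrite -scalemxAr !mulmxA.
case=> ux hx; exists (invmx g *m x *m g); last by rewrite !mulmxA mulmxV // mul1mx mulmxK.
rewrite /torusM; split; first by rewrite !unitmx_mul unitmx_inv ux ug.
rewrite !det_mulmx det_inv (_ : (\det g)^-1 * \det x * \det g = \det x); last by field.
rewrite !trmx_mul trmx_inv hS !mulmxA mulmxKV //.
by rewrite mulmxK // -!mulmxA (mulmxA x^T) (mulmxA (x^T *m S')) hx -scalemxAl -scalemxAr !mulmxA.
Qed.

Lemma invmx_uniq (A B : 'M[F]_2) : A \in unitmx -> A *m B = 1%:M -> invmx A = B.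
Proof. by move=> uA AB; rewrite -[LHS]mulmx1 -AB mulmxA mulVmx // mul1mx. Qed.

Lemma invmxM (A B : 'M[F]_2) : A \in unitmx -> B \in unitmx ->
  invmx (A *m B) = invmx B *m invmx A.
Proof.
move=> uA uB; apply: invmx_uniq; first by rewrite unitmx_mul uA uB.
by rewrite !mulmxA mulmxK // mulmxV.
Qed.

Lemma same_sym (A B : 'M[F]_2 -> Prop) : same_set A B -> same_set B A.
Proof. by move=> h x; split => /h. Qed.

Lemma same_trans (A B C : 'M[F]_2 -> Prop) : same_set A B -> same_set B C -> same_set A C.
Proof. by move=> h1 h2 x; split => [/h1/h2|/h2/h1]. Qed.

Lemma conj_same g (A B : 'M[F]_2 -> Prop) : same_set A B -> same_set (conj_set g A) (conj_set g B).
Proof. by move=> h x; split => -[t /h ht ->]; exists t. Qed.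

Lemma conj_comp g h (A : 'M[F]_2 -> Prop) : g \in unitmx -> h \in unitmx ->
  same_set (conj_set g (conj_set h A)) (conj_set (g *m h) A).
Proof.
move=> ug uh x; rewrite /conj_set invmxM //; split.
  by case=> _ [t ht ->] ->; exists t => //; rewrite !mulmxA.
by case=> t ht ->; exists (h *m t *m invmx h); [exists t | rewrite !mulmxA].
Qed.

Lemma conj_inv g (A : 'M[F]_2 -> Prop) : g \in unitmx ->
  same_set (conj_set (invmx g) (conj_set g A)) A.
Proof.
move=> ug x; split.
  by case=> _ [t ht ->] ->; rewrite invmxK !mulmxA mulVmx // mul1mx mulmxKV.
move=> hx; exists (g *m x *m invmx g); first by exists x.
by rewrite invmxK !mulmxA mulVmx // mul1mx mulmxKV.
Qed.


Lemma torusM_inv S t : torusM S t -> torusM S (invmx t).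
Proof.
case=> ut ht; split; first by rewrite unitmx_inv.
have dt : \det t != 0 by rewrite -unitfE -unitmxE.
have h : invmx t^T *m (t^T *m S *m t) *m invmx t = S.
  by rewrite !mulmxA mulVmx ?unitmx_tr // mul1mx mulmxK.
rewrite ht -scalemxAr -scalemxAl in h.
by rewrite det_inv trmx_inv -[in RHS]h scalerA mulVf // scale1r.
Qed.

Lemma Smx_diag (a : F) : Smx a 0 1 = mx2 a 0 0 1.
Proof. by rewrite /Smx mul0r. Qed.

Lemma torus_diag (a : F) : torus a 0 1 = torusM (mx2 a 0 0 1).
Proof. by rewrite /torus /torusM /inG Smx_diag. Qed.

Lemma torus_amx (a y : F) : y != 0 ->
  same_set (conj_set (amx y) (torusM (mx2 a 0 0 1))) (torusM (mx2 (a / y ^+ 2) 0 0 1)).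
Proof.
move=> y0; apply: torusM_conj.
  by rewrite unitmxE /amx detmx2 unitfE mulr1 mulr0 subr0.
rewrite /amx trmx2 !mulmx2; apply/mx2_eq; split; by field.
Qed.

Lemma torus_elt (a p q : F) : p * p + a * q * q != 0 ->
  torusM (mx2 a 0 0 1) (mx2 p q (- a * q) p).
Proof.
move=> h; split; first by rewrite unitmxE detmx2 unitfE; apply: contra h => /eqP h; apply/eqP; rewrite -h; ring.
by rewrite trmx2 !mulmx2 detmx2 scalemx2; apply/mx2_eq; split; ring.
Qed.

Lemma mulE (g h : 'M[F]_2) i j : (g *m h) i j = g i 0 * h 0 j + g i 1 * h 1 j.
Proof.
have -> : g *m h = mx2 (g 0 0) (g 0 1) (g 1 0) (g 1 1) *m mx2 (h 0 0) (h 0 1) (h 1 0) (h 1 1).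
  by rewrite -!mx2_eta.
by rewrite mulmx2 /mx2 mxE; case: (ord2_cases i) => ->; case: (ord2_cases j) => ->.
Qed.
End Mx.

Section Val.
Variables (F : fieldType) (v : F -> int).
Hypothesis HF : nonarch_local_field v.

Definition ge (k : int) (x : F) : bool := (x == 0) || (k <= v x).

Lemma geP k x : ge k x <-> x = 0 \/ k <= v x.
Proof. by rewrite /ge; split => [/orP[/eqP->|->]|[->|->]]; rewrite ?eqxx ?orbT; auto. Qed.

Lemma vM x y : x != 0 -> y != 0 -> v (x * y) = v x + v y.
Proof. by move=> /eqP hx /eqP hy; apply: (nalf_mul HF). Qed.

Lemma v1 : v 1 = 0.
Proof. have := vM (oner_neq0 F) (oner_neq0 F); rewrite mulr1 => h. by apply: (addrI (v 1)); rewrite addr0 -h. Qed.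

Lemma vN1 : v (-1) = 0.
Proof.
have h : (-1 : F) != 0 by rewrite oppr_eq0 oner_neq0.
have := vM h h; rewrite mulrNN mulr1 v1; lia.
Qed.

Lemma vN x : v (- x) = v x.
Proof.
have [->|hx] := eqVneq x 0; first by rewrite oppr0.
have h : (-1 : F) != 0 by rewrite oppr_eq0 oner_neq0.
by rewrite -mulN1r vM // vN1 add0r.
Qed.

Lemma vV x : x != 0 -> v x^-1 = - v x.
Proof.
move=> hx; have := vM hx (invr_neq0 hx); rewrite mulfV // v1; lia.
Qed.

Lemma vX x n : x != 0 -> v (x ^+ n) = (n%:Z) * v x.
Proof.
move=> hx; elim: n => [|n IH]; first by rewrite expr0 v1 mul0r.
rewrite exprS vM ?expf_neq0 // IH; lia.
Qed.

Lemma ge0 k : ge k 0. Proof. by rewrite /ge eqxx. Qed.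

Lemma geN k x : ge k (- x) = ge k x.
Proof. by rewrite /ge oppr_eq0 vN. Qed.

Lemma ge_le k l x : k <= l -> ge l x -> ge k x.
Proof. rewrite /ge => hkl /orP[->//|h]; apply/orP; right; exact: le_trans h. Qed.

Lemma geD k x y : ge k x -> ge k y -> ge k (x + y).
Proof.
have [->|hx] := eqVneq x 0; first by rewrite add0r.
have [->|hy] := eqVneq y 0; first by rewrite addr0.
have [->|hxy] := eqVneq (x + y) 0; first by rewrite ge0.
rewrite /ge (negPf hx) (negPf hy) (negPf hxy) /= => h1 h2.
have := nalf_ultra HF (elimN eqP hx) (elimN eqP hy) (elimN eqP hxy).
apply: le_trans; rewrite le_min h1 h2 //.
Qed.

Lemma geB k x y : ge k x -> ge k y -> ge k (x - y).
Proof. by move=> h1 h2; apply: geD => //; rewrite geN. Qed.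

Lemma geM k l x y : ge k x -> ge l y -> ge (k + l) (x * y).
Proof.
have [->|hx] := eqVneq x 0; first by move=> *; rewrite mul0r ge0.
have [->|hy] := eqVneq y 0; first by move=> *; rewrite mulr0 ge0.
rewrite /ge (negPf hx) (negPf hy) mulf_eq0 (negPf hx) (negPf hy) /= vM //.
exact: lerD.
Qed.

Lemma geM0 k x y : ge 0 x -> ge k y -> ge k (x * y).
Proof. by move=> h1 h2; have := geM h1 h2; rewrite add0r. Qed.

Lemma geM0r k x y : ge k x -> ge 0 y -> ge k (x * y).
Proof. by move=> h1 h2; have := geM h1 h2; rewrite addr0. Qed.

Lemma ge_unit x : x != 0 -> v x = 0 -> ge 0 x /\ ge 0 x^-1.
Proof.
move=> hx h; rewrite /ge vV // h (negPf hx) invr_eq0 (negPf hx) /=; lia.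
Qed.

Definition isu (x : F) := (x != 0) && (v x == 0).

Lemma isuP x : isu x <-> is_ounit v x.
Proof. by rewrite /isu /is_ounit; split => [/andP[/eqP h /eqP h']|[/eqP h /eqP h']] //; rewrite h h'. Qed.

Lemma isu_ge x : isu x = ge 0 x && ~~ ge 1 x.
Proof.
rewrite /isu /ge; have [->|hx] //= := eqVneq x 0.
apply/eqP/andP => [->|[h1 h2]]; first by split.
rewrite -ltNge in h2; lia.
Qed.

Lemma isuM x y : isu x -> isu y -> isu (x * y).
Proof.
move=> /andP[hx /eqP vx] /andP[hy /eqP vy].
by rewrite /isu mulf_neq0 //= vM // vx vy.
Qed.

Lemma isuV x : isu x -> isu x^-1.
Proof. by move=> /andP[hx /eqP vx]; rewrite /isu invr_eq0 hx vV // vx. Qed.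

Lemma isuN x : isu (- x) = isu x.
Proof. by rewrite /isu oppr_eq0 vN. Qed.

Lemma isu1 : isu 1. Proof. by rewrite /isu oner_neq0 v1. Qed.

Lemma isu_ge0 x : isu x -> ge 0 x.
Proof. by rewrite isu_ge => /andP[]. Qed.

Lemma isuV_ge0 x : isu x -> ge 0 x^-1.
Proof. by move/isuV/isu_ge0. Qed.

Lemma isuD x d : isu x -> ge 1 d -> isu (x + d).
Proof.
rewrite !isu_ge => /andP[h0 h1] hd; apply/andP; split.
  by apply: geD => //; apply: ge_le hd.
apply: contra h1 => h; have -> : x = (x + d) - d by rewrite addrK.
exact: geB.
Qed.

Lemma isu_X2 x : isu (x ^+ 2) -> isu x.
Proof.
rewrite /isu expf_eq0 /= => /andP[hx /eqP h]; rewrite hx /=.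
rewrite vX // in h; apply/eqP; lia.
Qed.

Lemma ge_mul_isu k x y : isu x -> ge k (x * y) -> ge k y.
Proof.
move=> hx h; have -> : y = x^-1 * (x * y).
  by rewrite mulrA mulVf ?mul1r //; case/andP: hx.
exact: geM0 (isuV_ge0 hx) h.
Qed.

Lemma ge1M x y : ge 0 x -> ge 0 y -> ge 1 (x * y) -> ge 1 x || ge 1 y.
Proof.
move=> hx hy hxy; apply/negPn/negP; rewrite negb_or => /andP[nx ny].
have ux : isu x by rewrite isu_ge hx.
have uy : isu y by rewrite isu_ge hy.
by move: (isuM ux uy); rewrite isu_ge hxy andbF.
Qed.

Lemma even_invol n (f : 'I_n -> 'I_n) : involutive f -> (forall i, f i != i) -> ~~ odd n.
Proof.
move=> finv fne.
pose A := [set i : 'I_n | (i < f i)%N].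
have hU : [set: 'I_n] = A :|: f @: A.
  apply/setP => i; rewrite !inE /=; apply/esym/orP.
  case: (ltngtP i (f i)) => [h|h|h]; first by left.
    by right; apply/imsetP; exists (f i); rewrite ?finv // inE finv.
  by move: (fne i); rewrite -(inj_eq val_inj) /= h eqxx.
have hD : [disjoint A & f @: A].
  rewrite -setI_eq0; apply/eqP/setP => i; rewrite !inE.
  apply/negP => /andP[h1 /imsetP[j]]; rewrite inE => h2 hij.
  by move: h1; rewrite hij finv; lia.
have := cardsUI A (f @: A).
rewrite -hU cardsT card_ord card_imset; last exact: (can_inj finv).
move: hD; rewrite -setI_eq0 => /eqP ->; rewrite cards0 addn0 => ->.
by rewrite addnn odd_double.
Qed.

Section Resid.
Variables (n : nat) (e : 'I_n -> F) (i0 : 'I_n).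
Hypothesis he_o : forall i, ge 0 (e i).
Hypothesis he_inj : forall i j, ge 1 (e i - e j) -> i = j.
Hypothesis he_surj : forall x, ge 0 x -> exists i, ge 1 (x - e i).

Definition rep x := odflt i0 [pick i | ge 1 (x - e i)].

Lemma repP x : ge 0 x -> ge 1 (x - e (rep x)).
Proof.
move=> hx; rewrite /rep; case: pickP => [i //|none].
by have [i hi] := he_surj hx; move: (none i); rewrite hi.
Qed.

Lemma rep_eq x i : ge 0 x -> ge 1 (x - e i) -> rep x = i.
Proof.
move=> hx hi; apply: he_inj.
have -> : e (rep x) - e i = (x - e i) - (x - e (rep x)) by ring.
by apply: geB => //; apply: repP.
Qed.

Lemma odd_v2 : odd n -> isu 2%:R.
Proof.
move=> hn.
have h2 : ge 0 2%:R.
  by rewrite -[2%:R]/(1 + 1 : F); apply: geD; rewrite /ge v1 lexx orbT.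
rewrite isu_ge h2 /=; apply/negP => h21.
have h1 : ge 0 1 by rewrite /ge v1 lexx orbT.
have h1n : ~~ ge 1 (1 : F) by rewrite /ge v1 oner_eq0.
pose f i := rep (e i + 1).
have hf i : ge 1 (e i + 1 - e (f i)) by apply: repP; apply: geD.
have finv : involutive f.
  move=> i; apply: rep_eq; first by apply: geD.
  have -> : e (f i) + 1 - e i = 2%:R - (e i + 1 - e (f i)) by ring.
  exact: geB.
have fne i : f i != i.
  apply/eqP => hfi; move: (hf i); rewrite hfi.
  have -> : e i + 1 - e i = 1 by ring.
  by rewrite (negPf h1n).
by move: (even_invol finv fne); rewrite hn.
Qed.

Definition rsq x := exists w, ge 0 w /\ ge 1 (x - w ^+ 2).

Definition U := [set i | ~~ ge 1 (e i)].
Definition sq i := rep (e i ^+ 2).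
Definition Q := sq @: U.

Lemma eU i : i \in U -> isu (e i).
Proof. by rewrite inE isu_ge he_o. Qed.

Lemma repU x : isu x -> rep x \in U.
Proof.
rewrite isu_ge => /andP[h0 h1]; rewrite inE; apply: contra h1 => h.
have -> : x = (x - e (rep x)) + e (rep x) by ring.
by apply: geD => //; apply: repP.
Qed.

Lemma QU : Q \subset U.
Proof.
apply/subsetP => i /imsetP[j /eU hj ->]; apply: repU.
by rewrite expr2; apply: isuM.
Qed.

Lemma fiber i j : i \in U -> j \in U -> sq i = sq j -> j = i \/ j = rep (- e i).
Proof.
move=> /eU ui /eU uj hij.
have h1 := repP (geM0 (he_o i) (he_o i)).
have h2 := repP (geM0 (he_o j) (he_o j)).
rewrite -!expr2 -/(sq i) -/(sq j) hij in h1 h2.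
have h3 : ge 1 ((e i - e j) * (e i + e j)).
  have -> : (e i - e j) * (e i + e j) = (e i ^+ 2 - e (sq j)) - (e j ^+ 2 - e (sq j)) by ring.
  exact: geB.
have [h|h] := orP (ge1M (geB (he_o i) (he_o j)) (geD (he_o i) (he_o j)) h3).
  by left; apply: he_inj; rewrite -geN opprB.
right; apply/esym/rep_eq; first by rewrite geN.
by rewrite -geN opprB opprK addrC.
Qed.

Lemma cardUQ : (#|U| <= 2 * #|Q|)%N.
Proof.
rewrite -sum1_card (partition_big_imset sq) /= -/Q.
rewrite mulnC -sum_nat_const; apply: leq_sum => j /imsetP[k kU ->].
rewrite sum1dep_card.
apply: (@leq_trans #|[set k; rep (- e k)]|); last by rewrite cards2; case: (_ != _).
apply: subset_leq_card; apply/subsetP => i; rewrite [in X in X -> _]inE => /andP[iU /eqP hik].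
by have [->|->] := fiber kU iU (esym hik); rewrite !inE eqxx ?orbT.
Qed.

Lemma not_rsq_Q x : isu x -> ~ rsq x -> rep x \in U :\: Q.
Proof.
move=> ux nx; rewrite inE repU // andbT; apply/negP => /imsetP[j jU hj].
apply: nx; exists (e j); split; first exact: he_o.
have -> : x - e j ^+ 2 = (x - e (rep x)) - (e j ^+ 2 - e (sq j)) by rewrite hj /sq; ring.
apply: geB; apply: repP; first exact: isu_ge0.
by rewrite expr2; apply: geM0.
Qed.

Lemma index2_res x y : isu x -> isu y -> ~ rsq x -> ~ rsq y -> rsq (x * y).
Proof.
move=> ux uy nx ny.
have x0 := isu_ge0 ux.
pose ma i := rep (x * e i).
have maP i : ge 1 (x * e i - e (ma i)) by apply: repP; apply: geM0.
have mainj : injective ma.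
  move=> i j hij; apply: he_inj; apply: (ge_mul_isu ux).
  have -> : x * (e i - e j) = (x * e i - e (ma i)) - (x * e j - e (ma j)) by rewrite hij; ring.
  exact: geB.
have sqP j : ge 1 (e j ^+ 2 - e (sq j)) by apply: repP; rewrite expr2; apply: geM0.
have sub : ma @: Q \subset U :\: Q.
  apply/subsetP => _ /imsetP[i iQ ->].
  have iU : i \in U := subsetP QU i iQ.
  rewrite inE repU ?andbT; last by apply: isuM => //; apply: eU.
  apply/negP => /imsetP[k kU hk].
  case/imsetP: iQ => j jU hj.
  have uj := eU jU.
  apply: nx; exists (e k / e j); split; first by apply: geM0r; [apply: he_o | apply: isuV_ge0].
  have ej0 : e j != 0 by case/andP: uj.
  have -> : x - (e k / e j) ^+ 2 = ((x * (e j ^+ 2 - e i) + (x * e i - e (ma i)) + (e (sq k) - e k ^+ 2)) * (e j ^+ 2)^-1).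
    rewrite -hk; field; done.
  apply: geM0r; last by apply: isuV_ge0; rewrite expr2; apply: isuM.
  apply: geD; [apply: geD|]; last by rewrite -geN opprB.
    by apply: geM0 => //; rewrite hj.
  exact: maP.
have cQ : #|ma @: Q| = #|Q| by apply: card_imset.
have hc : (#|U :\: Q| <= #|ma @: Q|)%N.
  rewrite cardsDS ?QU // cQ; have := subset_leq_card sub; rewrite cardsDS ?QU // cQ.
  have := cardUQ; lia.
have eqs : ma @: Q = U :\: Q by apply/eqP; rewrite eqEcard sub hc.
have := not_rsq_Q uy ny; rewrite -eqs => /imsetP[i iQ hb].
case/imsetP: iQ => j jU hj.
exists (x * e j); split; first by apply: geM0.
have -> : x * y - (x * e j) ^+ 2 = x * (y - e (rep y)) + x * (e (ma i) - x * e i) + x ^+ 2 * (e i - e j ^+ 2).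
  by rewrite hb; ring.
apply: geD; [apply: geD|].
- apply: geM0 => //; apply: repP; exact: isu_ge0.
- by apply: geM0 => //; rewrite -geN opprB.
- by apply: geM0; [rewrite expr2; apply: geM0 | rewrite -geN opprB hj].
Qed.
End Resid.

Lemma inmP x : in_m v x <-> ge 1 x.
Proof. rewrite geP /in_m; split => [[->|h]|[->|h]]; auto; right; lia. Qed.

Lemma inoP x : in_o v x <-> ge 0 x.
Proof. by rewrite geP /in_o. Qed.

Lemma residue_data : exists n (e : 'I_n -> F) (i0 : 'I_n), [/\ odd n,
  (forall i, ge 0 (e i)), (forall i j, ge 1 (e i - e j) -> i = j) &
  (forall x, ge 0 x -> exists i, ge 1 (x - e i))].
Proof.
have [s [hs1 hs2 hs3 hs4 hs5]] := nalf_residue HF.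
have hn : (0 < size s)%N by move: hs5; case: (size s).
exists (size s), (fun i => nth 0 s i), (Ordinal hn); split => //.
- by move=> i; apply/inoP; apply: hs1; apply: mem_nth.
- move=> i j hij; apply: val_inj => /=; apply/eqP.
  rewrite -(nth_uniq 0 _ _ hs2) //; apply/negPn/negP => hne.
  by apply: (hs3 _ _ (mem_nth 0 (ltn_ord i)) (mem_nth 0 (ltn_ord j)) hne); apply/inmP.
- move=> x /inoP hx; have [r rs hr] := hs4 x hx.
  have hi : (index r s < size s)%N by rewrite index_mem.
  exists (Ordinal hi) => /=.
  by rewrite nth_index //; apply/inmP.
Qed.

Lemma v2 : isu 2%:R.
Proof. have [n [e [i0 [hn he hinj hsurj]]]] := residue_data; exact: (odd_v2 i0 he hinj hsurj hn). Qed.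

Lemma index2 x y : isu x -> isu y -> ~ rsq x -> ~ rsq y -> rsq (x * y).
Proof.
have [n [e [i0 [hn he hinj hsurj]]]] := residue_data.
exact: (index2_res i0 he hinj hsurj).
Qed.

Fixpoint newton (x w : F) (k : nat) : F :=
  match k with 0 => w | k'.+1 => let y := newton x w k' in (y + x / y) / 2%:R end.

Lemma newton_step x y0 K : isu y0 -> (0 <= K) -> ge (K + 1) (y0 ^+ 2 - x) ->
  let y1 := (y0 + x / y0) / 2%:R in
  [/\ isu y1, ge (K + 1) (y1 - y0) & ge (K + 2) (y1 ^+ 2 - x)].
Proof.
move=> u0 hK h0 y1.
have n2 : (2%:R : F) != 0 by case/andP: v2.
have y00 : y0 != 0 by case/andP: u0.
pose d := (x - y0 ^+ 2) * (2%:R * y0)^-1.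
have hd : ge (K + 1) d.
  apply: geM0r; first by rewrite -geN opprB.
  by apply: isuV_ge0; apply: isuM => //; apply: v2.
have e1 : y1 = y0 + d by rewrite /y1 /d; field; rewrite n2 y00.
have e2 : y1 ^+ 2 - x = d * d by rewrite /y1 /d; field; rewrite n2 y00.
split.
- by rewrite e1; apply: isuD => //; apply: ge_le hd; lia.
- by rewrite e1 (_ : y0 + d - y0 = d) //; ring.
- by rewrite e2; apply: ge_le (geM hd hd); lia.
Qed.

Lemma hensel x w : isu x -> ge 0 w -> ge 1 (x - w ^+ 2) -> exists z, z ^+ 2 = x.
Proof.
move=> ux w0 hw.
have uw : isu w.
  rewrite isu_ge w0 /=; move: ux; rewrite isu_ge => /andP[_]; apply: contra => h.
  have -> : x = (x - w ^+ 2) + w * w by ring.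
  by apply: geD => //; have := geM w0 h; rewrite add0r.
pose y := newton x w.
have inv k : isu (y k) /\ ge (k%:Z + 1) (y k ^+ 2 - x).
  elim: k => [|k [uk ek]]; first by split => //; rewrite -geN opprB.
  have [h1 h2 h3] := newton_step uk (isT : 0 <= k%:Z) ek .
  split => //; apply: ge_le h3; lia.
have step k : ge (k%:Z + 1) (y k.+1 - y k).
  by have [uk ek] := inv k; have [] := newton_step uk (isT : 0 <= k%:Z) ek.
have cauchy k j : ge (k%:Z + 1) (y (k + j)%N - y k).
  elim: j => [|j IH]; first by rewrite addn0 subrr ge0.
  have -> : y (k + j.+1)%N - y k = (y (k + j).+1 - y (k + j)%N) + (y (k + j)%N - y k).
    by rewrite addnS; ring.
  by apply: geD => //; apply: ge_le (step _); lia.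
have hc : forall k : int, exists N, forall m n, (N <= m)%N -> (N <= n)%N ->
          y m - y n = 0 \/ k <= v (y m - y n).
  move=> k; exists `|k|%N => m n hm hn; apply/geP.
  have hk := lez_abs k.
  case: (leqP n m) => hnm.
    rewrite -(subnKC hnm); apply: ge_le (cauchy _ _); lia.
  rewrite -geN opprB -(subnKC (ltnW hnm)); apply: ge_le (cauchy _ _); lia.
have [l hl] := nalf_complete HF hc.
exists l; apply/eqP; rewrite -subr_eq0; apply/negPn/negP => hD.
pose K : int := (`|v (l ^+ 2 - x)|%N + 1)%N.
have [N hN] := hl K.
pose m := maxn N `|K|%N.
have /geP hm := hN m (leq_maxl _ _).
have hK0 : 0 <= K by [].
have [um em] := inv m.
have h1 : ge K (l - y m) by rewrite -geN opprB.
have h2 : ge 0 (l + y m).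
  have -> : l + y m = (l - y m) + (y m + y m) by ring.
  by apply: geD; [apply: ge_le h1 | apply: geD; apply: isu_ge0].
have : ge K (l ^+ 2 - x).
  have -> : l ^+ 2 - x = (l - y m) * (l + y m) + (y m ^+ 2 - x) by ring.
  apply: geD; first by have := geM h1 h2; rewrite addr0.
  apply: ge_le em; have := lez_abs K; have := leq_maxr N `|K|%N; lia.
rewrite /ge (negPf hD) /= /K; have := lez_abs (v (l ^+ 2 - x)); lia.
Qed.

Lemma nsq_nrsq a : isu a -> ~ (exists u, isu u /\ u * u = a) -> ~ rsq a.
Proof.
move=> ua hn [w [w0 hw]]; have [z hz] := hensel ua w0 hw.
by apply: hn; exists z; split; [apply: isu_X2; rewrite hz | rewrite -expr2].
Qed.

Lemma canon_ratio a1 a2 : isu a1 -> isu a2 ->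
  ~ (exists u, isu u /\ u * u = - a1) -> ~ (exists u, isu u /\ u * u = - a2) ->
  exists y, isu y /\ y ^+ 2 * a1 = a2.
Proof.
move=> u1 u2 n1 n2.
have u1n : isu (- a1) by rewrite isuN.
have u2n : isu (- a2) by rewrite isuN.
have := index2 u1n u2n (nsq_nrsq u1n n1) (nsq_nrsq u2n n2); rewrite mulrNN => -[w [w0 hw]].
have u12 := isuM u1 u2.
have [z hz] := hensel u12 w0 hw.
have uz : isu z by apply: isu_X2; rewrite hz.
have a10 : a1 != 0 by case/andP: u1.
exists (z / a1); split; first by apply: isuM => //; apply: isuV.
by rewrite expr_div_n hz; field.
Qed.


Lemma even_half (x : int) : ~~ odd `|x|%N -> exists m : int, x = m + m.
Proof.
move=> h.
have hn : `|x|%N = (`|x|%N./2 + `|x|%N./2)%N by rewrite -{1}(odd_double_half `|x|%N) (negPf h) add0n -addnn.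
exists (if 0 <= x then (`|x|%N./2)%:Z else - (`|x|%N./2)%:Z).
case: ifP => hx; lia.
Qed.

Lemma val_exists (j : int) : exists w, w != 0 /\ v w = j.
Proof.
have [pi [/eqP p0 vp]] := nalf_normalized HF.
case: j => n.
  by exists (pi ^+ n); rewrite expf_neq0 // vX // vp mulr1.
exists (pi ^+ n.+1)^-1; rewrite invr_eq0 expf_neq0 // vV ?expf_neq0 // vX // vp mulr1.
by split => //; rewrite NegzE.
Qed.

Lemma canonP (a : F) : canonical_param v a <->
  isu a /\ ~ (exists u, isu u /\ u * u = - a).
Proof.
rewrite /canonical_param isuP; split => -[h1 h2]; split => // -[u [hu1 hu2]];
  by apply: h2; exists u; split => //; apply/isuP.
Qed.

Lemma part3 T1 T2 : canonical_torus v T1 -> canonical_torus v T2 ->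
  exists2 y, is_ounit v y & same_set T1 (conj_set (amx y) T2).
Proof.
case=> a1 [/canonP [u1 n1] h1]; case=> a2 [/canonP [u2 n2] h2].
have [y [uy hy]] := canon_ratio u1 u2 n1 n2.
have y0 : y != 0 by case/andP: uy.
exists y; first by apply/isuP.
apply: same_trans h1 _; rewrite torus_diag.
apply: same_sym; apply: same_trans (conj_same _ h2) _; rewrite torus_diag.
apply: same_trans (torus_amx _ y0) _.
have -> : a2 / y ^+ 2 = a1 by rewrite -hy; field.
by move=> ?.
Qed.

Lemma part2 T : inert_torus v T -> exists2 g, inG g & canonical_torus v (conj_set g T).
Proof.
case=> a [b [c [[hd [hns hev]] hT]]].
set d := b ^+ 2 - 4%:R * a * c in hd hns hev.
have d0 : d != 0 by apply/eqP.
have c0 : c != 0.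
  apply/eqP => c0; apply: hns; exists b; rewrite /d c0 mulr0 subr0 expr2 //.
have two0 : (2%:R : F) != 0 by apply: (nalf_char0 HF 1).
have c2 : 2%:R * c != 0 by rewrite mulf_neq0.
have [m hm] := even_half hev.
have [w [w0 hw]] := val_exists (m - v (2%:R * c)).
pose a' := - d / (2%:R * c) ^+ 2 / w ^+ 2.
have a0 : a' != 0 by rewrite /a' !mulf_neq0 ?oppr_eq0 ?invr_eq0 ?expf_neq0.
have va : v a' = 0.
  rewrite /a' vM ?mulf_neq0 ?oppr_eq0 ?invr_eq0 ?expf_neq0 //.
  rewrite vM ?oppr_eq0 ?invr_eq0 ?expf_neq0 // vN !vV ?expf_neq0 // !vX // hw hm; lia.
pose g := amx w *m mx2 1 0 (b / (2%:R * c)) 1.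
have ug : g \in unitmx.
  rewrite unitmxE /g /amx mulmx2 detmx2 unitfE; apply: contra w0 => /eqP h; apply/eqP; rewrite -h; ring.
exists g => //; exists a'; split.
  apply/canonP; split; first by rewrite /isu a0 va eqxx.
  case=> u [_ hu]; apply: hns; exists (u * (2%:R * c) * w).
  have -> : d = - a' * ((2%:R * c) ^+ 2 * w ^+ 2). rewrite /a'; field; by rewrite w0 c0 two0.
  rewrite (_ : u * (2%:R * c) * w * (u * (2%:R * c) * w) = (u * u) * ((2%:R * c) ^+ 2 * w ^+ 2)); last by ring.
  by rewrite hu.
apply: same_trans (conj_same _ hT) _.
rewrite torus_diag.
have hS : Smx a b c = c *: (g^T *m mx2 a' 0 0 1 *m g).
  rewrite /g /amx /Smx /a' /d !mulmx2 trmx2 !mulmx2 scalemx2; apply/mx2_eq.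
  split; field; rewrite ?c0 ?c2 ?w0 ?two0 //.
have e : same_set (torus a b c) (torusM (g^T *m mx2 a' 0 0 1 *m g)).
  move=> x; rewrite -(torusM_scale _ c0 x) -hS; exact: iff_refl.
apply: same_trans (conj_same _ e) _.
exact: torusM_conj ug (erefl _).
Qed.

Lemma amx_unit (y : F) : y != 0 -> amx y \in unitmx.
Proof. by move=> y0; rewrite unitmxE /amx detmx2 unitfE mulr1 mulr0 subr0. Qed.

Lemma part1 T1 T2 : inert_torus v T1 -> inert_torus v T2 ->
  exists2 g, inG g & same_set (conj_set g T1) T2.
Proof.
move=> i1 i2.
have [g1 ug1 c1] := part2 i1.
have [g2 ug2 c2] := part2 i2.
have [y [y0 _] hy] := part3 c2 c1.
have ua := amx_unit (introN eqP y0).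
exists (invmx g2 *m (amx y *m g1)); first by rewrite /inG !unitmx_mul unitmx_inv ug2 ua ug1.
apply: same_sym.
apply: same_trans (same_sym (conj_inv T2 ug2)) _.
apply: same_trans (conj_same _ hy) _.
apply: same_trans (conj_same _ (conj_comp _ ua ug1)) _.
by apply: conj_comp; rewrite ?unitmx_inv ?unitmx_mul ?ua.
Qed.

Lemma B1_unit (b : 'M[F]_2) : inB1 b -> b \in unitmx.
Proof. by case=> y [x [y0 ->]]; rewrite unitmxE detmx2 unitfE mulr1 mulr0 subr0; apply/eqP. Qed.

Lemma B1_inv (b : 'M[F]_2) : inB1 b -> inB1 (invmx b).
Proof.
case=> y [x [y0 ->]]; rewrite invmx2 /=; last by rewrite mulr1 mulr0 subr0; apply/eqP.
exists (1 / y), (- x / y); split; first by rewrite mul1r; apply/eqP; rewrite invr_eq0; apply/eqP.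
have y0' : y != 0 by apply/eqP.
by apply/mx2_eq; split; field.
Qed.

Lemma nondeg (a p q : F) : canonical_param v a -> p * p + a * q * q = 0 -> q = 0 /\ p = 0.
Proof.
case/canonP => ua na h.
have [q0|q0] := eqVneq q 0.
  by split => //; move: h; rewrite q0 !mulr0 addr0 => /eqP; rewrite mulf_eq0 orbb => /eqP.
exfalso; apply: na; exists (p / q).
have e : p / q * (p / q) = - a.
  rewrite (_ : p / q * (p / q) = (p * p + a * q * q) / (q * q) - a); first by rewrite h mul0r add0r.
  by field.
split => //; apply: isu_X2; rewrite expr2 e isuN //.
Qed.

Definition tpart (a : F) (g : 'M[F]_2) := mx2 (g 1 1) (- g 1 0 / a) (g 1 0) (g 1 1).

Lemma decomp (a : F) (g : 'M[F]_2) : canonical_param v a -> g \in unitmx ->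
  [/\ torusM (mx2 a 0 0 1) (tpart a g), inB1 (g *m invmx (tpart a g)) &
      g = (g *m invmx (tpart a g)) *m tpart a g].
Proof.
move=> ca ug.
have a0 : a != 0 by case: ca => -[/eqP].
have dg : \det g != 0 by rewrite -unitfE -unitmxE.
set p := g 1 1; set q := - g 1 0 / a.
have hD : p * p + a * q * q != 0.
  apply/eqP => /(nondeg ca) [hq hp]; move: dg; rewrite {1}(mx2_eta g) detmx2 -/p hp.
  have -> : g 1 0 = - a * q by rewrite /q; field.
  by rewrite hq !mulr0 subr0 eqxx.
have ht : tpart a g = mx2 p q (- a * q) p.
  by rewrite /tpart; congr mx2; rewrite /q; field.
have ut : tpart a g \in unitmx.
  by rewrite ht unitmxE detmx2 unitfE; apply: contra hD => /eqP h; apply/eqP; rewrite -h; ring.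
split; last by rewrite mulmxKV.
- by rewrite ht; apply: torus_elt.
have hD' : p * p - q * (- a * q) != 0 by apply: contra hD => /eqP h; apply/eqP; rewrite -h; ring.
rewrite ht invmx2 //= {1}(mx2_eta g) mulmx2.
have eq10 : g 1 0 = - a * q by rewrite /q; field.
rewrite -/p eq10.
set D := p * p - q * (- a * q).
exists (g 0 0 * (p / D) + g 0 1 * (- (- a * q) / D)), (g 0 0 * (- q / D) + g 0 1 * (p / D)); split.
  have -> : g 0 0 * (p / D) + g 0 1 * (- (- a * q) / D) = \det g / D.
    by rewrite [in RHS](mx2_eta g) detmx2 -/p eq10; field.
  by apply/eqP; rewrite mulf_eq0 invr_eq0 negb_or dg hD'.
by apply/mx2_eq; split => //; rewrite /D; field; rewrite ?hD'.
Qed.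

Lemma inK_eta (g : 'M[F]_2) : inK v g <->
  [/\ ge 0 (g 0 0), ge 0 (g 0 1), ge 0 (g 1 0), ge 0 (g 1 1) & isu (\det g)].
Proof.
split.
  by case=> h hd; split; try (apply/inoP; apply: h); apply/isuP.
case=> h00 h01 h10 h11 hd; split; last by apply/isuP.
by move=> i j; apply/inoP; case: (ord2_cases i) => ->; case: (ord2_cases j) => ->.
Qed.

Lemma inK_unit g : inK v g -> g \in unitmx.
Proof. by case/inK_eta => _ _ _ _ /andP[h _]; rewrite unitmxE unitfE. Qed.

Lemma inK_mul g h : inK v g -> inK v h -> inK v (g *m h).
Proof.
move=> /inK_eta [g00 g01 g10 g11 gd] /inK_eta [h00 h01 h10 h11 hd].
apply/inK_eta; rewrite det_mulmx !mulE.
split; last by apply: isuM.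
all: by apply: geD; apply: geM0.
Qed.

Lemma inK_inv g : inK v g -> inK v (invmx g).
Proof.
move=> /inK_eta [h00 h01 h10 h11 hd].
have dg : \det g != 0 by case/andP: hd.
have E : invmx g = mx2 (g 1 1 / \det g) (- g 0 1 / \det g) (- g 1 0 / \det g) (g 0 0 / \det g).
  by rewrite {1}(mx2_eta g) invmx2 /= -detmx2 -mx2_eta.
apply/inK_eta; rewrite det_inv E.
have [e1 e2 e3 e4] := mx2E (g 1 1 / \det g) (- g 0 1 / \det g) (- g 1 0 / \det g) (g 0 0 / \det g).
rewrite e1 e2 e3 e4; have hdi := isuV_ge0 hd.
by split; try (apply: geM0r => //; rewrite ?geN //); apply: isuV.
Qed.

Lemma K_tpart a g : canonical_param v a -> inK v g -> inK v (tpart a g).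
Proof.
move=> /canonP [ua na] /inK_eta [h00 h01 h10 h11 hd].
have a0 : a != 0 by case/andP: ua.
set p := g 1 1 in h11 *; set c := g 1 0 in h10 *.
have key : isu (a * p * p + c * c).
  case hc : (ge 1 c); case hp : (ge 1 p).
  - exfalso; move: hd; rewrite isu_ge (mx2_eta g) detmx2 -/p -/c.
    by rewrite (geB (geM0 h00 hp) (geM0 h01 hc)) andbF.
  - have up : isu p by rewrite isu_ge h11 hp.
    by apply: isuD; [apply: isuM => //; apply: isuM | apply: geM0].
  - have uc : isu c by rewrite isu_ge h10 hc.
    by rewrite addrC; apply: isuD; [apply: isuM | apply: geM0 hp; apply: geM0 (isu_ge0 ua) h11].
  - have up : isu p by rewrite isu_ge h11 hp.
    have uc : isu c by rewrite isu_ge h10 hc.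
    apply/negPn/negP => hn.
    have hs : ge 1 (a * p * p + c * c).
      move: hn; rewrite isu_ge negb_and negbK => /orP[|//].
      by rewrite geD // ?geM0 // ?geM0 // isu_ge0.
    have p0 : p != 0 by case/andP: up.
    apply: (nsq_nrsq _ na); first by rewrite isuN.
    exists (c / p); split; first by apply: geM0r => //; apply: isuV_ge0.
    have -> : - a - (c / p) ^+ 2 = - (a * p * p + c * c) * (p * p)^-1 by field.
    by apply: geM0r; [rewrite geN | apply: isuV_ge0; apply: isuM].
apply/inK_eta; rewrite /tpart; have [e1 e2 e3 e4] := mx2E p (- c / a) c p.
rewrite e1 e2 e3 e4 detmx2; split => //.
  by apply: geM0r; [rewrite geN | apply: isuV_ge0].
have -> : p * p - - c / a * c = (a * p * p + c * c) / a by field.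
by apply: isuM => //; apply: isuV.
Qed.

Lemma part4 T : canonical_torus v T ->
     [/\ same_set (@inG F) (prod_set (@inB1 F) T),
         same_set (@inG F) (prod_set T (@inB1 F)),
         same_set (inK v) (prod_set (inB1o v) (inTo v T))
       & same_set (inK v) (prod_set (inTo v T) (inB1o v))].
Proof.
case=> a [ca hT]; rewrite torus_diag in hT.
have Tu t : T t -> t \in unitmx by case/hT.
have Tinv t : T t -> T (invmx t) by move/hT/torusM_inv/hT.
have Ku := @inK_unit.
split.
- move=> g; split.
    move=> ug; have [h1 h2 h3] := decomp ca ug.
    by exists (g *m invmx (tpart a g)), (tpart a g); split => //; apply/hT.
  by case=> b [t [hb ht ->]]; rewrite /inG unitmx_mul (B1_unit hb) (Tu _ ht).
- move=> g; split.
    move=> ug; have uig : invmx g \in unitmx by rewrite unitmx_inv.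
    have [h1 h2 h3] := decomp ca uig.
    exists (invmx (tpart a (invmx g))), (invmx (invmx g *m invmx (tpart a (invmx g)))).
    split; [by apply: Tinv; apply/hT | by apply: B1_inv |].
    case: h1 => ut _; by rewrite invmxM ?unitmx_inv // !invmxK mulmxA mulVmx // mul1mx.
  by case=> t [b [ht hb ->]]; rewrite /inG unitmx_mul (B1_unit hb) (Tu _ ht).
- move=> g; split.
    move=> kg; have ug := Ku _ kg; have [h1 h2 h3] := decomp ca ug.
    have kt := K_tpart ca kg.
    exists (g *m invmx (tpart a g)), (tpart a g); split => //.
      by split => //; apply: inK_mul => //; apply: inK_inv.
    by split => //; apply/hT.
  by case=> b [t [[_ kb] [_ kt] ->]]; apply: inK_mul.
- move=> g; split.
    move=> kg; have kig := inK_inv kg; have uig := Ku _ kig.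
    have [h1 h2 h3] := decomp ca uig.
    have kt := K_tpart ca kig.
    have kb : inK v (invmx g *m invmx (tpart a (invmx g))) by apply: inK_mul => //; apply: inK_inv.
    exists (invmx (tpart a (invmx g))), (invmx (invmx g *m invmx (tpart a (invmx g)))).
    split; [split; [by apply: Tinv; apply/hT | exact: inK_inv] | split; [by apply: B1_inv | exact: inK_inv] |].
    case: h1 => ut _; have ug := Ku _ kg; by rewrite invmxM ?unitmx_inv // !invmxK mulmxA mulVmx // mul1mx.
  by case=> t [b [[_ kt] [_ kb] ->]]; apply: inK_mul.
Qed.
End Val.

Theorem proposition2p3 (F : fieldType) (v : F -> int) :
  nonarch_local_field v ->
  (* (1) *)
  (forall T1 T2 : 'M[F]_2 -> Prop, inert_torus v T1 -> inert_torus v T2 ->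
     exists2 g, inG g & same_set (conj_set g T1) T2) /\
  (* (2) *)
  (forall T : 'M[F]_2 -> Prop, inert_torus v T ->
     exists2 g, inG g & canonical_torus v (conj_set g T)) /\
  (* (3) *)
  (forall T1 T2 : 'M[F]_2 -> Prop, canonical_torus v T1 -> canonical_torus v T2 ->
     exists2 y, is_ounit v y & same_set T1 (conj_set (amx y) T2)) /\
  (* (4) *)
  (forall T : 'M[F]_2 -> Prop, canonical_torus v T ->
     [/\ same_set (@inG F) (prod_set (@inB1 F) T),
         same_set (@inG F) (prod_set T (@inB1 F)),
         same_set (inK v) (prod_set (inB1o v) (inTo v T))
       & same_set (inK v) (prod_set (inTo v T) (inB1o v))]).
Proof.
move=> HF; split; [|split; [|split]].
- exact: part1 HF.
- exact: part2 HF.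
- exact: part3 HF.
- exact: part4 HF.
Qed.
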